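(* Let $f\in\mathbb{R}[\mathbf{x}]$, $\mathscr{A}=\operatorname{supp}(f)$, and let $\mathscr{B}\subseteq\mathbb{N}^n$ be a finite set of exponents. Let $f^1_{\mathrm{ts}}$ be the optimal value of $$\mathbf{P}^1_{\mathrm{ts}}:\quad\inf_{\mathbf{y}}\{L_{\mathbf{y}}(f):\ \mathbf{B}_{G^{(1)}}\circ\mathbf{M}_{\mathscr{B}}(\mathbf{y})\in\Pi_{G^{(1)}}(\mathbb{S}^+_{|\mathscr{B}|}),\ y_{\mathbf{0}}=1\}$$ and let $f_{\mathrm{sdsos}}=\sup\{b\in\mathbb{R}: f-b\in\mathrm{SDSOS}\}$. Then $f^1_{\mathrm{ts}}\ge f_{\mathrm{sdsos}}$.
   Context: A symmetric $t\times t$ matrix $\mathbf{G}$ is diagonally dominant if $\mathbf{G}_{ii}\ge\sum_{j\ne i}|\mathbf{G}_{ij}|$ for all $i$, and scaled diagonally dominant if $\mathbf{D}\mathbf{G}\mathbf{D}$ is diagonally dominant for some positive definite diagonal matrix $\mathbf{D}$. A polynomial $h$ belongs to $\mathrm{SDSOS}$ if $h=(\mathbf{x}^{\mathscr{B}})^\intercal\mathbf{G}\,\mathbf{x}^{\mathscr{B}}$ for some scaled diagonally dominant $\mathbf{G}$ indexed by $\mathscr{B}$, where $\mathbf{x}^{\mathscr{B}}=(\mathbf{x}^\beta)_{\beta\in\mathscr{B}}$. Graphs: a chordal extension $G'$ of $G$ is a chordal graph (every cycle of length $\ge4$ has a chord) on the same nodes containing $G$; chordal extensions are fixed so that $G\subseteq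 H$ implies $G'\subseteq H'$. For a graph $G$ with nodes $V\subseteq\mathbb{N}^n$, $\operatorname{supp}(G)=\{\beta+\gamma:\beta=\gamma\in V\text{ or }\{\beta,\gamma\}\in E(G)\}$. $G^{(0)}$ is the graph with nodes $\mathscr{B}$ and edges $\{\beta,\gamma\}$, $\beta\ne\gamma$, $\beta+\gamma\in\mathscr{A}\cup2\mathscr{B}$; $F^{(1)}$ has nodes $\mathscr{B}$ and edges $\{\beta,\gamma\}$, $\beta\ne\gamma$, $\beta+\gamma\in\operatorname{supp}(G^{(0)})$; $G^{(1)}=(F^{(1)})'$. $L_{\mathbf{y}}(\sum f_\alpha\mathbf{x}^\alpha)=\sum f_\alpha y_\alpha$; $\mathbf{M}_{\mathscr{B}}(\mathbf{y})$ is indexed by $\mathscr{B}$ with $(\beta,\gamma)$-entry $y_{\beta+\gamma}$. For a graph $G$ on nodes $V$: $\mathbb{S}(G)$ is the set of symmetric matrices indexed by $V$ vanishing off the pattern of $G$ (off-diagonal non-edges); $\Pi_G$ zeroes off-pattern entries; $\Pi_G(\mathbb{S}^+_{|V|})=\{\Pi_G(\mathbf{Q}):\mathbf{Q}\succeq0\}$; $\mathbf{B}_G$ is the adjacency matrix with unit diagonal; $\circ$ is the entrywise product. *)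

(* Defs.v *)
From HB Require Import structures.
From mathcomp Require Import all_boot all_order all_algebra.
From mathcomp Require Import finmap.
From mathcomp Require Import mpoly.
From mathcomp Require Import boolp classical_sets reals constructive_ereal ereal.

Set Implicit Arguments.
Unset Strict Implicit.
Unset Printing Implicit Defensive.

Import Order.TTheory GRing.Theory Num.Theory.
Local Open Scope ring_scope.
Local Open Scope fset_scope.

(* A "matrix indexed by a finite index type T" is a function T -> T -> R. *)
Section Matrices.
Variables (R : realType) (T : finType).

Definition symmetric_mx (G : T -> T -> R) : Prop := forall i j, G i j = G j i.

Definition psd (Q : T -> T -> R) : Prop :=
  symmetric_mx Q /\ forall v : T -> R, 0 <= \sum_i \sum_j v i * Q i j * v j.

Definition diag_dominant (G : T -> T -> R) : Prop :=
  symmetric_mx G /\ forall i, \sum_(j | j != i) `|G i j| <= G i i.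

Definition diag_scale (d : T -> R) (G : T -> T -> R) : T -> T -> R :=
  fun i j => d i * G i j * d j.

Definition scaled_diag_dominant (G : T -> T -> R) : Prop :=
  symmetric_mx G /\
  exists d : T -> R, (forall i, 0 < d i) /\ diag_dominant (diag_scale d G).

Definition hadamard (A B : T -> T -> R) : T -> T -> R := fun i j => A i j * B i j.

Definition adjB (E : rel T) : T -> T -> R :=
  fun i j => if (i == j) || E i j then 1 else 0.

Definition projG (E : rel T) (Q : T -> T -> R) : T -> T -> R :=
  fun i j => if (i == j) || E i j then Q i j else 0.

Definition projG_psd (E : rel T) : set (T -> T -> R) :=
  [set projG E Q | Q in [set Q | psd Q]].

End Matrices.

Section Graphs.
Variable T : finType.

Definition simple_graph (E : rel T) : Prop :=
  (forall x y, E x y = E y x) /\ (forall x, ~~ E x x).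

(* a cycle of length >= 4: distinct vertices s_0, ..., s_(k-1), k >= 4,
   with s_i adjacent to s_(i+1 mod k); a chord joins two of its vertices
   that are not consecutive along the cycle. *)
Definition chordal (E : rel T) : Prop :=
  forall s : seq T, uniq s -> (4 <= size s)%N -> cycle E s ->
    exists i j : 'I_(size s), [/\ i != j,
       (j : nat) != (i.+1 %% size s)%N, (i : nat) != (j.+1 %% size s)%N
       & E (tnth (in_tuple s) i) (tnth (in_tuple s) j)].

Definition chordal_extension (E E' : rel T) : Prop :=
  simple_graph E' /\ (forall x y, E x y -> E' x y) /\ chordal E'.

End Graphs.

Section TSSOS.
Variables (R : realType) (n : nat).

Local Notation mono := ('X_{1..n}).

Definition supp (f : {mpoly R[n]}) : pred mono := fun a => a \in msupp f.

Variable B : {fset mono}.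
Local Notation node := (B : finType).

Definition G0 (f : {mpoly R[n]}) : rel node :=
  fun b c => (b != c) &&
    (supp f (val b + val c)%MM ||
     [exists d : node, (val b + val c)%MM == (val d + val d)%MM]).

Definition supp_graph (E : rel node) : pred mono :=
  fun a => [exists b : node, exists c : node,
              ((b == c) || E b c) && (a == (val b + val c)%MM)].

Definition F1 (f : {mpoly R[n]}) : rel node :=
  fun b c => (b != c) && supp_graph (G0 f) (val b + val c)%MM.

Definition Ly (y : mono -> R) (f : {mpoly R[n]}) : R :=
  \sum_(a <- msupp f) f@_a * y a.

Definition moment_mx (y : mono -> R) : node -> node -> R :=
  fun b c => y (val b + val c)%MM.

(* SDSOS (with respect to the monomial basis x^B) *)
Definition sdsos (h : {mpoly R[n]}) : Prop :=
  exists G : node -> node -> R, scaled_diag_dominant G /\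
    h = \sum_b \sum_c G b c *: 'X_[(val b + val c)%MM].

Definition ts_feasible (E1 : rel node) (y : mono -> R) : Prop :=
  projG_psd E1 (hadamard (adjB R E1) (moment_mx y)) /\ y 0%MM = 1.

Definition f_ts (f : {mpoly R[n]}) (E1 : rel node) : \bar R :=
  ereal_inf [set (Ly y f)%:E | y in ts_feasible E1].

Definition f_sdsos (f : {mpoly R[n]}) : \bar R :=
  ereal_sup [set b%:E | b in [set b : R | sdsos (f - b%:MP)]].

End TSSOS.

(* Main.v *)
Require Import Defs.
From HB Require Import structures.
From mathcomp Require Import all_boot all_order all_algebra.
From mathcomp Require Import finmap mpoly.
From mathcomp Require Import boolp classical_sets reals constructive_ereal ereal.
From mathcomp Require Import ring lra.

Import Order.TTheory GRing.Theory Num.Theory.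

Local Open Scope ring_scope.

Section Aux.
Variable R : realType.

Lemma sum_v (T : finType) (F : T -> R) (i j : T) (x y : R) : i != j ->
  \sum_b F b * (x * (b == i)%:R + y * (b == j)%:R) = x * F i + y * F j.
Proof.
move=> ij.
rewrite (bigD1 i) //= (bigD1 j) 1?eq_sym //= big1 => [|b /andP[bi bj]].
  have ji : j != i by rewrite eq_sym.
  by rewrite !eqxx (negbTE ji) /= !mulr1 !mulr0 !addr0 !add0r mulrC [F j * _]mulrC.
by rewrite (negbTE bi) (negbTE bj) /= !mulr0 addr0 mulr0.
Qed.

Lemma sum_v1 (T : finType) (F : T -> R) (i : T) :
  \sum_b F b * (b == i)%:R = F i.
Proof.
rewrite (bigD1 i) //= big1 => [|b bi]; first by rewrite eqxx mulr1 addr0.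
by rewrite (negbTE bi) mulr0.
Qed.

Lemma quad2 (T : finType) (P : T -> T -> R) (i j : T) (x y : R) : i != j ->
  \sum_a \sum_b (x * (a == i)%:R + y * (a == j)%:R) * P a b *
     (x * (b == i)%:R + y * (b == j)%:R) =
  x * (x * P i i + y * P i j) + y * (x * P j i + y * P j j).
Proof.
move=> ij.
transitivity (\sum_a (x * P a i + y * P a j) *
     (x * (a == i)%:R + y * (a == j)%:R)).
  apply: eq_bigr => a _.
  under eq_bigr do rewrite -mulrA.
  by rewrite -mulr_sumr sum_v // mulrC.
by rewrite sum_v.
Qed.

Lemma dd_psd (T : finType) (H P : T -> T -> R) :
  diag_dominant H -> psd P -> 0 <= \sum_i \sum_j H i j * P i j.
Proof.
move=> [symH ddH] [symP qP].
have quad : forall i j x y, i != j ->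
    0 <= x * (x * P i i + y * P i j) + y * (x * P j i + y * P j j).
  move=> i j x y ij; rewrite -(@quad2 _ P i j x y ij).
  exact: (qP (fun a => x * (a == i)%:R + y * (a == j)%:R)).
have Pii : forall i, 0 <= P i i.
  move=> i; have := qP (fun a => (a == i)%:R).
  under eq_bigr do under eq_bigr do rewrite -mulrA.
  under eq_bigr do rewrite -mulr_sumr sum_v1.
  by rewrite (eq_bigr (fun a => P a i * (a == i)%:R)) ?sum_v1 // => a _; rewrite mulrC.
have key : forall i j, j != i ->
    - (`|H i j| * (P i i + P j j)) <= 2 * (H i j * P i j).
  move=> i j ji.
  have ij : i != j by rewrite eq_sym.
  have h1 := quad i j 1 1 ij; have h2 := quad i j 1 (-1) ij.
  rewrite (symP j i) in h1 h2.
  have hP : `|2 * P i j| <= P i i + P j j.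
    by rewrite ler_norml; apply/andP; split; lra.
  rewrite mulrCA; apply: lerNnormlW; rewrite normrM.
  by apply: ler_wpM2l.
pose A := \sum_i \sum_(j | j != i) `|H i j| * P i i.
pose Bs := \sum_i \sum_(j | j != i) `|H i j| * P j j.
have F1 : \sum_i \sum_j H i j * P i j =
   \sum_i H i i * P i i + \sum_i \sum_(j | j != i) H i j * P i j.
  by rewrite -big_split; apply: eq_bigr => i _; rewrite (bigD1 i).
have F2 : - (A + Bs) <= 2 * \sum_i \sum_(j | j != i) H i j * P i j.
  have -> : - (A + Bs) = \sum_i \sum_(j | j != i) - (`|H i j| * (P i i + P j j)).
    rewrite /A /Bs -big_split -sumrN; apply: eq_bigr => i _.
    by rewrite -big_split -sumrN; apply: eq_bigr => j _; rewrite mulrDr.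
  rewrite mulr_sumr; apply: ler_sum => i _; rewrite mulr_sumr.
  by apply: ler_sum => j ji; apply: key.
have F3 : Bs = A.
  rewrite /Bs /A; under eq_bigr do rewrite big_mkcond /=.
  rewrite exchange_big /=; apply: eq_bigr => i _.
  rewrite [RHS]big_mkcond /=; apply: eq_bigr => j _.
  by rewrite eq_sym symH.
have F4 : 0 <= \sum_i H i i * P i i - A.
  rewrite /A -sumrB; apply: sumr_ge0 => i _.
  rewrite -mulr_suml -mulrBl; apply: mulr_ge0 => //.
  by rewrite subr_ge0.
lra.
Qed.

Variable n : nat.
Implicit Types (p q : {mpoly R[n]}) (y : 'X_{1..n} -> R).

Lemma Ly_seq y p (s : seq 'X_{1..n}) : uniq s -> {subset msupp p <= s} ->
  Ly y p = \sum_(a <- s) p@_a * y a.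
Proof.
move=> us sub; rewrite /Ly; symmetry.
rewrite (bigID (mem (msupp p))) /= [X in _ + X]big1 ?addr0 => [|a /memN_msupp_eq0 ->]; last by rewrite mul0r.
rewrite -big_filter; apply: perm_big; apply: uniq_perm.
- exact: filter_uniq.
- exact: msupp_uniq.
by move=> a; rewrite mem_filter /=; case: (boolP (a \in msupp p)) => // /sub ->.
Qed.

Lemma LyD y : {morph Ly y : p q / p + q}.
Proof.
move=> p q.
pose s := undup (msupp p ++ msupp q ++ msupp (p + q)).
have us : uniq s by exact: undup_uniq.
have s1 : {subset msupp p <= s} by move=> a ha; rewrite mem_undup !mem_cat ha.
have s2 : {subset msupp q <= s} by move=> a ha; rewrite mem_undup !mem_cat ha !orbT.
have s3 : {subset msupp (p + q) <= s} by move=> a ha; rewrite mem_undup !mem_cat ha !orbT.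
rewrite (Ly_seq y _ s us s1) (Ly_seq y _ s us s2) (Ly_seq y _ s us s3).
by rewrite -big_split; apply: eq_bigr => a _; rewrite mcoeffD mulrDl.
Qed.

Lemma Ly0 y : Ly y 0 = 0.
Proof. by rewrite /Ly msupp0 big_nil. Qed.

Lemma LyZ y c p : Ly y (c *: p) = c * Ly y p.
Proof.
rewrite (Ly_seq y (c *: p) (msupp p) (msupp_uniq p)) => [|a]; last first.
  rewrite !mcoeff_msupp mcoeffZ; apply: contraNN => /eqP ->; by rewrite mulr0.
by rewrite /Ly mulr_sumr; apply: eq_bigr => a _; rewrite mcoeffZ mulrA.
Qed.

Lemma LyX y m : Ly y 'X_[m] = y m.
Proof. by rewrite /Ly msuppX big_seq1 mcoeffX eqxx mul1r. Qed.

Lemma LyC y c : Ly y c%:MP = c * y 0%MM.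
Proof.
rewrite (Ly_seq y c%:MP [:: 0%MM]) // => [|a]; last first.
  rewrite mcoeff_msupp mcoeffC inE; apply: contraNT => /negbTE ->; by rewrite mulr0.
by rewrite big_seq1 mcoeffC eqxx mulr1.
Qed.

Lemma LyB y p q : Ly y (p - q) = Ly y p - Ly y q.
Proof. by rewrite LyD -scaleN1r LyZ mulN1r. Qed.

Lemma Ly_sum y (I : finType) (F : I -> {mpoly R[n]}) :
  Ly y (\sum_i F i) = \sum_i Ly y (F i).
Proof. exact: (big_morph (Ly y) (LyD y) (Ly0 y)). Qed.

End Aux.

Lemma add_mnm_eq0 n (m1 m2 : 'X_{1..n}) : (m1 + m2)%MM = 0%MM -> m1 = 0%MM.
Proof.
move=> h; apply/mnmP => k; have := congr1 (fun m : 'X_{1..n} => m k) h.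
by rewrite mnmDE !mnm0E => /eqP; rewrite addn_eq0 => /andP[/eqP -> _].
Qed.

Lemma core (R : realType) (n : nat) (f : {mpoly R[n]})
    (B : {fset 'X_{1..n}}) (G1 : rel B) (b : R) (y : 'X_{1..n} -> R) :
  chordal_extension (F1 f) G1 -> sdsos B (f - b%:MP) -> ts_feasible G1 y ->
  b <= Ly y f.
Proof.
move=> [_ [subG1 _]] [G [[symG [d [dpos [_ ddG]]]] hE]] [[Q psdQ hQ] y0].
pose P (a : 'X_{1..n}) := ~~ supp f a && ~~ [exists e : B, a == (val e + val e)%MM].
have Pd : forall i : B, P (val i + val i)%MM = false.
  by move=> i; rewrite /P; apply/negbTE; rewrite negb_and !negbK; apply/orP; right;
     apply/existsP; exists i.
have e1 : Ly y (f - b%:MP) = Ly y f - b by rewrite LyB LyC y0 mulr1.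
have e2 : Ly y (f - b%:MP) = \sum_i \sum_j G i j * y (val i + val j)%MM.
  rewrite hE Ly_sum; apply: eq_bigr => i _; rewrite Ly_sum; apply: eq_bigr => j _.
  by rewrite LyZ LyX.
pose Gp (i j : B) := if P (val i + val j)%MM then 0 else G i j.
have e3 : \sum_i \sum_j G i j * y (val i + val j)%MM =
          \sum_i \sum_j Gp i j * Q i j.
  pose h' := \sum_(i : B) \sum_(j : B)
     (if P (val i + val j)%MM then G i j else 0) *: 'X_[(val i + val j)%MM].
  have h'0 : h' = 0.
    apply/mpolyP => al; rewrite mcoeff0 /h' raddf_sum /=.
    under eq_bigr do rewrite raddf_sum /=.
    under eq_bigr do under eq_bigr do rewrite mcoeffZ mcoeffX.
    case: (boolP [exists i : B, exists j : B, (val i + val j)%MM == al]) => [ex|nex]; last first.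
      rewrite big1 // => i _; rewrite big1 // => j _.
      case: eqP; rewrite ?mulr0 // => ijal; case/negP: nex.
      by apply/existsP; exists i; apply/existsP; exists j; apply/eqP.
    case Pal: (P al); last first.
      rewrite big1 // => i _; rewrite big1 // => j _.
      by case: eqP => [->|]; rewrite ?Pal ?mul0r ?mulr0.
    have al0 : al != 0%MM.
      apply/eqP => al0; move: ex => /existsP[i /existsP[j /eqP ijal]].
      move: Pal; rewrite /P al0 => /andP[_ /existsP[]]; exists i.
      have i0 := @add_mnm_eq0 _ _ _ (etrans ijal al0).
      by rewrite i0 add0m.
    transitivity ((f - b%:MP)@_al).
      rewrite hE raddf_sum /=; apply: eq_bigr => i _; rewrite raddf_sum /=.
      apply: eq_bigr => j _; rewrite mcoeffZ mcoeffX.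
      by case: eqP => [->|]; rewrite ?Pal ?mulr0.
    rewrite mcoeffB mcoeffC (negbTE al0) mulr0 subr0.
    apply: memN_msupp_eq0; by move: Pal => /andP[].
  have : Ly y h' = 0 by rewrite h'0 Ly0.
  rewrite /h' Ly_sum => hs.
  set S := \sum_i Ly y _ in hs.
  have -> : \sum_i \sum_j G i j * y (val i + val j)%MM =
     \sum_i \sum_j G i j * y (val i + val j)%MM - S by rewrite hs subr0.
  rewrite /S -sumrB; apply: eq_bigr => i _.
  rewrite Ly_sum -sumrB; apply: eq_bigr => j _.
  rewrite LyZ LyX /Gp; case PP: (P _); first by rewrite mul0r subrr.
  rewrite mul0r subr0.
  have := congr1 (fun F => F i j) hQ; rewrite /projG /hadamard /adjB /moment_mx /=.
  have -> : (i == j) || G1 i j.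
    case: (boolP (i == j)) => //= ij; apply: subG1.
    move: PP; rewrite /P => /negbT; rewrite negb_and !negbK => hor.
    rewrite /F1 ij /=; apply/existsP; exists i; apply/existsP; exists j.
    apply/andP; split; last exact: eqxx.
    by apply/orP; right; rewrite /G0 ij /=; exact: hor.
  by rewrite mul1r => ->.
have e4 : 0 <= \sum_i \sum_j Gp i j * Q i j.
  have Gpsym : forall i j, Gp i j = Gp j i by move=> i j; rewrite /Gp addmC symG.
  have dn0 : forall i, d i != 0 by move=> i; apply/lt0r_neq0/dpos.
  have -> : \sum_i \sum_j Gp i j * Q i j =
     \sum_i \sum_j diag_scale d Gp i j * (Q i j / (d i * d j)).
    apply: eq_bigr => i _; apply: eq_bigr => j _; rewrite /diag_scale.
    by field; rewrite !dn0.
  apply: (@dd_psd R B (diag_scale d Gp) (fun i j => Q i j / (d i * d j))).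

    split; first by move=> i j; rewrite /diag_scale Gpsym; ring.
    move=> i.
    have -> : diag_scale d Gp i i = diag_scale d G i i by rewrite /diag_scale /Gp Pd.
    apply: le_trans (ddG i); apply: ler_sum => j _.
    rewrite /diag_scale /Gp; case: (P _) => //.
    by rewrite mulr0 mul0r normr0.
  case: psdQ => symQ qQ; split.
    by move=> i j; rewrite (symQ i j) [d j * _]mulrC.
  move=> v; have := qQ (fun i => v i / d i).
  congr (_ <= _); apply: eq_bigr => i _; apply: eq_bigr => j _.
  by field; rewrite !dn0.
by rewrite -subr_ge0 -e1 e2 e3.
Qed.

Local Open Scope ereal_scope.

Theorem theorem7p3 (R : realType) (n : nat) (f : {mpoly R[n]})
    (B : {fset 'X_{1..n}}) (G1 : rel B) :
  chordal_extension (F1 f) G1 ->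
  f_sdsos B f <= f_ts f G1.
Proof.
move=> hc; apply: ge_ereal_sup => _ [b Sb <-].
apply/ereal_infP => _ [y fy <-].
rewrite lee_fin; exact: core hc Sb fy.
Qed.
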